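(* In an ado-semilattice $(S,\sqcup,\cap)$, for all $a,b,c,d\in S$: (1) if $d\lesssim a\cap b$ and $d\lesssim b\cap c$ then $d\lesssim a\cap c$; (2) if $d\lesssim a$, $d\lesssim b$ and $d\lesssim a\curlyvee b$ then $d\lesssim a\cap b$.
   Context: An o-semilattice is an algebra $(L,\cap,\sqcup)$ such that $(L,\cap)$ is a semilattice and, with $x\leq y$ iff $x=x\cap y$, for all $x,y,z$: (i) $x\leq x\sqcup y$; (ii) $(x\cap y)\sqcup(y\cap z)\leq y$; (iii) $x\sqcup y\leq x\sqcup(y\cap(x\sqcup y))$; (iv) $x\cap z\leq(x\cap y)\sqcup z$. It is distributive if $(a\cap d)\sqcup((b\cap d)\cap(c\cap d))=((a\cap d)\sqcup(b\cap d))\cap((a\cap d)\sqcup(c\cap d))$ for all $a,b,c,d$. An ado-semilattice is a distributive o-semilattice in which $\sqcup$ is associative. In an ado-semilattice, $x\lesssim y$ means $y\sqcup x=y$, and $a\curlyvee b$ is defined as $(a\sqcup b)\cap(b\sqcup a)$. *)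

(* Defs.v *)
Section Defs.
Variable S : Type.
Variables (meet join : S -> S -> S).

Definition ole (x y : S) : Prop := x = meet x y.

Definition is_semilattice : Prop :=
  (forall x y z, meet x (meet y z) = meet (meet x y) z) /\
  (forall x y, meet x y = meet y x) /\
  (forall x, meet x x = x).

Definition is_o_semilattice : Prop :=
  is_semilattice /\
  (forall x y, ole x (join x y)) /\
  (forall x y z, ole (join (meet x y) (meet y z)) y) /\
  (forall x y, ole (join x y) (join x (meet y (join x y)))) /\
  (forall x y z, ole (meet x z) (join (meet x y) z)).

Definition is_distributive : Prop :=
  forall a b c d,
    join (meet a d) (meet (meet b d) (meet c d)) =
    meet (join (meet a d) (meet b d)) (join (meet a d) (meet c d)).

Definition is_ado_semilattice : Prop :=
  is_o_semilattice /\ is_distributive /\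
  (forall x y z, join x (join y z) = join (join x y) z).

Definition olesim (x y : S) : Prop := join y x = y.

Definition ovee (a b : S) : S := meet (join a b) (join b a).

End Defs.

Arguments ole {S} meet x y.
Arguments is_semilattice {S} meet.
Arguments is_o_semilattice {S} meet join.
Arguments is_distributive {S} meet join.
Arguments is_ado_semilattice {S} meet join.
Arguments olesim {S} join x y.
Arguments ovee {S} meet join a b.

(* Main.v *)
Require Import Defs.
From Stdlib Require Import Setoid.

Theorem lemma3p6 (S : Type) (meet join : S -> S -> S)
  (H : is_ado_semilattice meet join) :
  forall a b c d : S,
    (olesim join d (meet a b) -> olesim join d (meet b c) ->
       olesim join d (meet a c)) /\
    (olesim join d a -> olesim join d b -> olesim join d (ovee meet join a b) ->
       olesim join d (meet a b)).
Proof.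
  destruct H as [[[mA [mC mI]] [ax1 [ax2 [ax3 ax4]]]] [dist jA]].
  unfold ole, is_distributive in *. unfold olesim, ovee.
  assert (letr : forall x y z, x = meet x y -> y = meet y z -> x = meet x z).
  { intros x y z h1 h2. transitivity (meet x (meet y z)).
    rewrite <- h2; exact h1. rewrite mA, <- h1; reflexivity. }
  assert (lel : forall x y, meet x y = meet (meet x y) x).
  { intros x y. rewrite (mC _ x), mA, mI. reflexivity. }
  assert (ler : forall x y, meet x y = meet (meet x y) y).
  { intros x y. rewrite <- mA, mI. reflexivity. }
  assert (glb : forall x y z, z = meet z x -> z = meet z y -> z = meet z (meet x y)).
  { intros x y z h1 h2. rewrite mA, <- h1, <- h2. reflexivity. }
  assert (anti : forall x y, x = meet x y -> y = meet y x -> x = y).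
  { intros x y h1 h2. rewrite h1, mC, <- h2. reflexivity. }
  assert (F5 : forall u v q, u = meet u q -> v = meet v q -> join u v = meet (join u v) q).
  { intros u v q hu hv. pose proof (ax2 u q v) as h.
    rewrite <- hu, (mC q v), <- hv in h. exact h. }
  assert (F6 : forall u v q, u = meet u q -> v = meet v q -> v = meet v (join u v)).
  { intros u v q hu hv. pose proof (ax4 q u v) as h.
    rewrite (mC q v), <- hv, (mC q u), <- hu in h. exact h. }
  assert (refl : forall x, x = meet x x). { intros; rewrite mI; reflexivity. }
  assert (supC : forall u v q, u = meet u q -> v = meet v q -> join u v = join v u).
  { intros u v q hu hv. apply anti.
    - apply F5. apply (F6 v u q); assumption. apply ax1.
    - apply F5. apply (F6 u v q); assumption. apply ax1. }
  assert (lej : forall u v, u = meet u v -> join u v = v).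
  { intros u v h. apply anti. apply F5; [exact h | apply refl].
    apply (F6 u v v); [exact h | apply refl]. }
  assert (jle : forall u v, u = meet u v -> join v u = v).
  { intros u v h. apply anti. apply F5; [apply refl | exact h]. apply ax1. }
  assert (rmono : forall p x y, x = meet x y -> join p x = meet (join p x) (join p y)).
  { intros p x y h. rewrite <- (lej x y h), jA. apply ax1. }
  assert (tsim : forall d x y, join x d = x -> join y x = y -> join y d = y).
  { intros d x y h1 h2. rewrite <- h2 at 1. rewrite <- jA, h1, h2. reflexivity. }
  assert (LC : forall x y q d, x = meet x q -> y = meet y q -> join x d = x ->
             join y d = y -> join (meet x y) d = meet x y).
  { intros x y q d hx hy hdx hdy.
    assert (ht : meet q (join d q) = meet (meet q (join d q)) q) by apply lel.
    assert (dt : join d (meet q (join d q)) = join d q).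
    { apply anti. apply (rmono d _ q ht). apply ax3. }
    assert (dq : join q d = q). { apply (tsim d x q hdx). apply jle. exact hx. }
    assert (xt : forall z, z = meet z q -> join z d = z -> join z (meet q (join d q)) = q).
    { intros z hz hzd. rewrite <- hzd at 1. rewrite <- jA, dt, jA, hzd. apply lej. exact hz. }
    assert (hm : meet x y = meet (meet x y) q).
    { apply (letr _ x). apply lel. exact hx. }
    assert (mt : join (meet x y) (meet q (join d q)) = q).
    { rewrite (supC _ _ q hm ht).
      pose proof (dist (meet q (join d q)) x y q) as h.
      rewrite <- ht, <- hx, <- hy in h. rewrite h.
      rewrite (supC _ _ q ht hx), (supC _ _ q ht hy), (xt x hx hdx), (xt y hy hdy).
      apply mI. }
    assert (ds : d = meet d (join (meet q (join d q)) d)).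
    { pose proof (ax4 (join d q) q d) as h.
      rewrite (mC (join d q) d), <- (ax1 d q), (mC (join d q) q) in h. exact h. }
    assert (eq_ : join (meet x y) d = meet (join (meet x y) d) q).
    { eapply letr. apply (rmono (meet x y) _ _ ds).
      rewrite jA, mt, dq. apply refl. }
    assert (ex : forall z, z = meet z q -> join z d = z -> meet x y = meet (meet x y) z ->
                 join (meet x y) d = meet (join (meet x y) d) z).
    { intros z hz hzd hmz.
      assert (e1 : join z (join (meet x y) d) = z).
      { rewrite jA, (jle _ _ hmz). exact hzd. }
      rewrite <- e1 at 1. apply (F6 z _ q hz eq_). }
    apply anti.
    - apply glb. apply ex; [exact hx | exact hdx | apply lel]. apply ex; [exact hy | exact hdy | apply ler].
    - apply ax1. }
  intros a b c d. split.
  - intros h1 h2.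
    pose proof (LC (meet a b) (meet b c) b d (ler a b) (lel b c) h1 h2) as h.
    apply (tsim d _ _ h). apply jle.
    apply glb.
    + apply (letr _ (meet a b)). apply lel. apply lel.
    + apply (letr _ (meet b c)). apply ler. apply ler.
  - intros ha hb hw.
    set (w := meet (join a b) (join b a)) in *.
    assert (haw : join (meet a w) d = meet a w).
    { apply (LC a w (join a b) d); auto. apply lel. }
    assert (hbw : join (meet b w) d = meet b w).
    { apply (LC b w (join b a) d); auto. apply ler. }
    pose proof (LC (meet a w) (meet b w) w d (ler a w) (ler b w) haw hbw) as h.
    apply (tsim d _ _ h). apply jle.
    apply glb.
    + apply (letr _ (meet a w)). apply lel. apply lel.
    + apply (letr _ (meet b w)). apply ler. apply lel.
Qed.
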